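(* Let $\kappa$ be a cardinal (or ordinal), let $C_\alpha$ ($\alpha<\kappa$) be compact metric spaces, let $C=\prod_{\alpha<\kappa}C_\alpha$, and let $X\subseteq C$ and $r\colon C\to X$ be a continuous map with $r(x)=x$ for all $x\in X$. Let $S\subseteq\kappa$ be $r$-admissible. Then the map $p_S\colon X\to X_S$, $p_S(x)=x\restriction S$, where $X_S=\{x\restriction S: x\in X\}\subseteq \prod_{\alpha\in S}C_\alpha$, is an open retraction.
   Context: A set $S\subseteq\kappa$ is called $r$-admissible if for all $x,x'\in C$, $x\restriction S=x'\restriction S$ implies $r(x)\restriction S=r(x')\restriction S$. A retraction is a continuous map $f\colon X\to Y$ which has a continuous right inverse, i.e. there is a continuous $j\colon Y\to X$ with $f\circ j=\mathrm{id}_Y$. An open retraction is a retraction which is an open map. All spaces are completely regular. *)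

(* Defs.v *)
From HB Require Import structures.
From mathcomp Require Import all_boot all_order all_algebra.
From mathcomp Require Import all_classical all_reals all_analysis.
Unset Printing Implicit Defensive.
Import Order.TTheory GRing.Theory Num.Theory.
Local Open Scope classical_set_scope.

Definition open_map (T U : topologicalType) (f : T -> U) : Prop :=
  forall A : set T, open A -> open (f @` A).

Definition retraction (T U : topologicalType) (f : T -> U) : Prop :=
  continuous f /\ exists j : U -> T, continuous j /\ forall y, f (j y) = y.

Definition open_retraction (T U : topologicalType) (f : T -> U) : Prop :=
  retraction T U f /\ open_map T U f.

Section Restriction.
Context {K : Type} (C : K -> topologicalType).

Definition restr (S : set K) (x : prod_topology C) :
  prod_topology (fun a : set_type S => C (set_val a)) :=
  fun a => x (set_val a).

Definition restr_set (X : set (prod_topology C)) (S : set K) :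
  set (prod_topology (fun a : set_type S => C (set_val a))) :=
  restr S @` X.

Definition pS (X : set (prod_topology C)) (S : set K) (x : set_type X) :
  set_type (restr_set X S) :=
  @exist _ (fun y => y \in restr_set X S) (restr S (set_val x))
    (mem_set (imageP (restr S) (set_mem (svalP x)))).

Definition admissible (X : set (prod_topology C)) (r : prod_topology C -> set_type X)
  (S : set K) : Prop :=
  forall x x' : prod_topology C, restr S x = restr S x' ->
    restr S (set_val (r x)) = restr S (set_val (r x')).
End Restriction.
Arguments open_map {T U} f.
Arguments retraction {T U} f.
Arguments open_retraction {T U} f.
Arguments restr {K C} S x.
Arguments restr_set {K C} X S.
Arguments pS {K C} X S x.
Arguments admissible {K C} X r S.

(* Main.v *)
Require Import Defs.
From HB Require Import structures.
From mathcomp Require Import all_boot all_order all_algebra.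
From mathcomp Require Import all_classical all_reals all_analysis.
Local Open Scope classical_set_scope.

Lemma proj_cont {I : Type} (T : I -> topologicalType) i :
  continuous (fun f : prod_topology T => f i).
Proof.
move=> f.
have := @cvg_sup _ _ (fun i => Topological.class
    (initial_topology (fun f : (forall i, T i) => f i))) (nbhs f) f _.
case; first exact: (@nbhs_filter (prod_topology T) f). move=> + _ => /(_ cvg_id) h A /=.
move=> /(@initial_continuous _ (T i) (fun g : (forall i, T i) => g i) f).
exact: h.
Qed.

Lemma prod_cont_coord {Y : topologicalType} {I : Type} (T : I -> topologicalType)
  (g : Y -> prod_topology T) : (forall i, continuous (fun y => g y i)) -> continuous g.
Proof.
move=> cg y.
apply/(@cvg_sup _ _ (fun i => Topological.class
    (initial_topology (fun f : (forall i, T i) => f i)))) => i.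
have := @continuous_comp_initial _ Y (T i) (fun f : (forall i, T i) => f i) g (cg i).
exact.
Qed.

Section Main.
Context (K : Type) (C : K -> topologicalType) (S : set K).

Definition ext (z : prod_topology C)
  (y : prod_topology (fun a : set_type S => C (set_val a))) : prod_topology C :=
  fun a => match pselect (S a) with
           | left h => y (@exist _ (fun x => x \in S) a (mem_set h))
           | right _ => z a end.

Lemma ext_restr z y : restr S (ext z y) = y.
Proof.
apply: functional_extensionality_dep => a; rewrite /restr /ext.
case: pselect => h.
  by case: a h => a ha h; rewrite (bool_irrelevance (mem_set h) ha).
by exfalso; apply: h; exact: set_valP.
Qed.

Lemma restr_ext x : ext x (restr S x) = x.
Proof.
apply: functional_extensionality_dep => a; rewrite /restr /ext.
by case: pselect.
Qed.

Lemma ext_cont z : continuous (ext z).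
Proof.
apply: prod_cont_coord => a; rewrite /ext.
case: pselect => h; last exact: cst_continuous.
exact: (@proj_cont _ (fun a : set_type S => C (set_val a)) (@exist _ (fun x => x \in S) a (mem_set h))).
Qed.

Lemma restr_cont : continuous (restr S : prod_topology C -> _).
Proof.
apply: prod_cont_coord => a; rewrite /restr.
exact: proj_cont.
Qed.
End Main.
Arguments ext {K C} S z y.

Theorem lemma2p1 (R : realType) (K : Type) (C : K -> pseudoMetricType R)
  (Chaus : forall a, hausdorff_space (C a))
  (Ccpt : forall a, compact [set: C a])
  (X : set (prod_topology C)) (r : prod_topology C -> set_type X)
  (rcont : continuous r)
  (rfix : forall x : set_type X, r (set_val x) = x)
  (S : set K) (Sadm : admissible X r S) :
  open_retraction (pS X S).
Proof.
pose phi (x0 : set_type X) (y : set_type (restr_set X S)) : set_type X :=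
  r (ext S (set_val x0) (set_val y)).
have phic x0 : continuous (phi x0).
  move=> y; rewrite /phi.
  apply: continuous_comp; last exact: rcont.
  apply: continuous_comp; last exact: ext_cont.
  exact: initial_continuous.
have phiK x0 y : pS X S (phi x0 y) = y.
  apply: val_inj => /=.
  case: y => y hy /=; have /set_mem [x Xx ey] := hy.
  rewrite /phi /=.
  have -> : restr S (set_val (r (ext S (set_val x0) y)))
         = restr S (set_val (r x)).
    by apply: Sadm; rewrite ext_restr ey.
  have -> : r x = @exist _ (fun z => z \in X) x (mem_set Xx).
    exact: (rfix (@exist _ (fun z => z \in X) x (mem_set Xx))).
  by [].
have phiI x0 : phi x0 (pS X S x0) = x0.
  by rewrite /phi /= restr_ext rfix.
split; [split|].
- apply: continuous_comp_initial.
  have -> : set_val \o pS X S = restr S \o set_val by [].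
  move=> x; apply: continuous_comp; first exact: initial_continuous.
  exact: restr_cont.
- have [[x0 _]|hne] := pselect (exists x0 : set_type X, True).
    by exists (phi x0); split.
  have emp : set_type (restr_set X S) -> False.
    case=> y /set_mem [x Xx _]; apply: hne.
    by exists (@exist _ (fun z => z \in X) x (mem_set Xx)).
  exists (fun y => False_rect _ (emp y)); split.
    by move=> y; case: (emp y).
  by move=> y; case: (emp y).
- move=> U oU; rewrite openE => _ [x0 Ux0 <-].
  rewrite /interior.
  have : nbhs x0 U by move: oU; rewrite openE; exact.
  rewrite -{1}(phiI x0) => /(phic x0 (pS X S x0)).
  rewrite !nbhsE => -[V [oV Vp] VU].
  exists V; first by split.
  move=> y /VU /= Uy.
  by exists (phi x0 y) => //; rewrite phiK.
Qed.
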